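(* Let $(\breve N,\breve g,\breve P)$ be a Golden semi-Riemannian manifold. Then $\breve N$ admits no $1$-lightlike transversal lightlike submanifold. That is, there is no transversal lightlike submanifold $\acute N$ with $\operatorname{rank}(\mathrm{Rad}\,T\acute N)=1$.
   Context: A Golden semi-Riemannian manifold is $(\breve N,\breve g,\breve P)$ with $\breve P^2=\breve P+I$ and $\breve g(\breve PX,Y)=\breve g(X,\breve PY)$. Lightlike submanifold $(\acute N,g,S(T\acute N),S(T\acute N^\perp))$: the induced metric is degenerate with radical $\mathrm{Rad}\,T\acute N=T\acute N\cap T\acute N^\perp$ of constant rank $r\ge1$. The screen $S(T\acute N)$ is non-degenerate with $T\acute N=\mathrm{Rad}\,T\acute N\perp S(T\acute N)$. The screen transversal bundle $S(T\acute N^\perp)$ is a complement of $\mathrm{Rad}\,T\acute N$ in $T\acute N^\perp$. The lightlike transversal bundle $ltr(T\acute N)$ is locally spanned by $N_i$ with $\breve g(N_i,\xi_j)=\delta_{ij}$ and $\breve g(N_i,N_j)=0$, and is orthogonal to $S(T\acute N)$ and $S(T\acute N^\perp)$. The submanifold is $r$-lightlike if $\operatorname{rank}\mathrm{Rad}\,T\acute N=r$. A transversal lightlike submanifold is one with $\breve P(\mathrm{Rad}\,T\acute N)=ltr(T\acute N)$ and $\breve P(S(T\acute N))\subseteq S(T\acute N^\perp)$. *)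

(* Defs.v *)
(* Pointwise (tangent-space) linear-algebra model of a
   Golden semi-Riemannian manifold and of a transversal lightlike
   submanifold. *)
From HB Require Import structures.
From mathcomp Require Import all_boot all_order all_algebra.
Set Implicit Arguments. Unset Strict Implicit. Unset Printing Implicit Defensive.
Import Order.TTheory GRing.Theory Num.Theory.
Local Open Scope ring_scope.

(* vectors of the ambient tangent space are row vectors 'rV[R]_n;
   the metric is given by its Gram matrix G: g(x,y) = x G y^T *)
Definition form (R : realFieldType) (n : nat) (G : 'M[R]_n) (x y : 'rV[R]_n) : R :=
  (x *m G *m y^T) 0 0.

(* Golden semi-Riemannian structure (on one tangent space):
   g symmetric non-degenerate (any index), P^2 = P + I, g(PX,Y) = g(X,PY).
   Endomorphisms act on row vectors on the right: PX := x *m P. *)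
Definition golden_semi_riemannian (R : realFieldType) (n : nat) (G P : 'M[R]_n) : Prop :=
  [/\ G^T = G, G \in unitmx, P *m P = P + 1%:M &
      forall x y : 'rV[R]_n, form G (x *m P) y = form G x (y *m P)].

(* Subspaces are represented by (row spaces of) matrices, mxalgebra style.
   TN = tangent space of the submanifold, TNp = TN^perp, S = S(TN),
   Sp = S(TN^perp), rows of xi = basis xi_1..xi_r of Rad TN,
   rows of Nv = N_1..N_r spanning ltr(TN). *)
Definition lightlike_submanifold (R : realFieldType) (n : nat) (G : 'M[R]_n)
    (TN TNp S Sp : 'M[R]_n) (r : nat) (xi Nv : 'M[R]_(r, n)) : Prop :=
  [/\
      (forall x : 'rV[R]_n,
         (x <= TNp)%MS <-> (forall y : 'rV[R]_n, (y <= TN)%MS -> form G y x = 0)),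
      [/\ (1 <= r)%N, \rank (TN :&: TNp)%MS = r,
          (xi == (TN :&: TNp))%MS & row_free xi],
      [/\ (S :&: (TN :&: TNp) == (0 : 'M[R]_n))%MS, (S + (TN :&: TNp) == TN)%MS &
          forall x : 'rV[R]_n, (x <= S)%MS ->
            (forall y : 'rV[R]_n, (y <= S)%MS -> form G x y = 0) -> x = 0],
      (Sp :&: (TN :&: TNp) == (0 : 'M[R]_n))%MS /\ (Sp + (TN :&: TNp) == TNp)%MS &
      [/\ forall i j : 'I_r, form G (row i Nv) (row j xi) = (i == j)%:R,
          forall i j : 'I_r, form G (row i Nv) (row j Nv) = 0,
          forall (i : 'I_r) (y : 'rV[R]_n), (y <= S)%MS -> form G (row i Nv) y = 0 &
          forall (i : 'I_r) (y : 'rV[R]_n), (y <= Sp)%MS -> form G (row i Nv) y = 0]].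

Definition transversal_lightlike (R : realFieldType) (n : nat) (G P : 'M[R]_n)
    (TN TNp S Sp : 'M[R]_n) (r : nat) (xi Nv : 'M[R]_(r, n)) : Prop :=
  [/\ lightlike_submanifold G TN TNp S Sp xi Nv,
      (xi *m P == Nv)%MS &
      (S *m P <= Sp)%MS].

(* Main.v *)
Require Import Defs.
From HB Require Import structures.
From mathcomp Require Import all_boot all_order all_algebra.
Import Order.TTheory GRing.Theory Num.Theory.
Local Open Scope ring_scope.

Lemma row1_id (R : realFieldType) n (A : 'M[R]_(1, n)) (i : 'I_1) : row i A = A.
Proof. by apply/rowP=> j; rewrite mxE (ord1 i). Qed.

Lemma formZl (R : realFieldType) n (G : 'M[R]_n) (a : R) (x y : 'rV[R]_n) :
  Defs.form G (a *: x) y = a * Defs.form G x y.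
Proof. by rewrite /Defs.form -!scalemxAl mxE. Qed.

Lemma formDr (R : realFieldType) n (G : 'M[R]_n) (x y z : 'rV[R]_n) :
  Defs.form G x (y + z) = Defs.form G x y + Defs.form G x z.
Proof. by rewrite /Defs.form linearD /= mulmxDr mxE. Qed.

Lemma formC (R : realFieldType) n (G : 'M[R]_n) (x y : 'rV[R]_n) :
  G^T = G -> Defs.form G x y = Defs.form G y x.
Proof.
move=> GT; rewrite /Defs.form.
transitivity ((x *m G *m y^T)^T ord0 ord0); first by rewrite [RHS]mxE.
by rewrite !trmx_mul trmxK GT mulmxA.
Qed.

Theorem mainTheorem9 (R : realFieldType) (n : nat) (G P : 'M[R]_n) :
  golden_semi_riemannian G P ->
  ~ (exists (TN TNp S Sp : 'M[R]_n) (xi Nv : 'M[R]_(1, n)),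
        transversal_lightlike G P TN TNp S Sp xi Nv).
Proof.
case=> GT _ PP Psym [TN [TNp [S [Sp [xi [Nv [[HTNp [_ _ Hxi _] _ _ [HNxi HNN _ _]] HP _]]]]]]].
have /andP[Hxi1 _] := Hxi.
have := Hxi1; rewrite sub_capmx => /andP[xiTN xiTNp].
have xixi : Defs.form G xi xi = 0 by apply/(proj1 (HTNp xi) xiTNp).
have /andP[_ HN] := HP.
case/submxP: HN => D HD.
have {}HD : Nv = D 0 0 *: (xi *m P) by rewrite HD {1}[D]mx11_scalar mul_scalar_mx.
have e1 := HNxi ord0 ord0; have e2 := HNN ord0 ord0.
rewrite !row1_id HD /= in e1 e2.
rewrite formZl in e1.
have e3 : Defs.form G (xi *m P) (xi *m P) = Defs.form G (xi *m P) xi.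
  rewrite Psym -mulmxA PP mulmxDr mulmx1 formDr.
  by rewrite xixi addr0; exact: formC.
move: e2; rewrite formZl [Defs.form G (xi *m P) _](@formC _ _ _ _ _ GT) formZl e3.
move=> e2.
have : D 0 0 * (D 0 0 * Defs.form G (xi *m P) xi) = D 0 0 * 1 by rewrite e1.
by rewrite mulr1 e2 => /esym H0; move: e1; rewrite H0 mul0r => /eqP; rewrite eq_sym oner_eq0.
Qed.
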